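(* $\mathrm{Log}_{<1}(\mathbb{R})\not\subseteq\mathrm{Log}_{<1}(\mathbb{Q})$.
   Context: Modal formulas are built from a countable set of propositional variables using $\bot$, $\to$ and one unary modality $\lozenge$. A frame is a pair $(X,R)$; a valuation assigns subsets of $X$ to variables; $x\models\lozenge\varphi$ iff there is $y$ with $xRy$ and $y\models\varphi$. A formula is valid in a frame if true at every point under every valuation. For a metric space $(X,d)$, $\mathrm{Log}_{<1}(X)$ is the set of modal formulas valid in the frame $(X,R_{<1})$, where $xR_{<1}y$ iff $d(x,y)<1$. $\mathbb{R}$ and $\mathbb{Q}$ carry the metric $d(x,y)=|x-y|$. *)

(* Defs.v *)
From Stdlib Require Import Reals QArith Qreals.
Open Scope R_scope.

Inductive form : Type :=
  | Var : nat -> form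
  | Bot : form
  | Imp : form -> form -> form
  | Dia : form -> form.

Fixpoint sat {X : Type} (Rel : X -> X -> Prop) (V : nat -> X -> Prop)
  (x : X) (phi : form) : Prop :=
  match phi with
  | Var n => V n x
  | Bot => False
  | Imp a b => sat Rel V x a -> sat Rel V x b
  | Dia a => exists y, Rel x y /\ sat Rel V y a
  end.

Definition valid_in {X : Type} (Rel : X -> X -> Prop) (phi : form) : Prop :=
  forall (V : nat -> X -> Prop) (x : X), sat Rel V x phi.

Definition rel_lt1 {X : Type} (d : X -> X -> R) (x y : X) : Prop := d x y < 1.

Definition Log_lt1 {X : Type} (d : X -> X -> R) (phi : form) : Prop :=
  valid_in (rel_lt1 d) phi.

Definition dist_R (x y : R) : R := Rabs (x - y).
Definition dist_Q (x y : Q) : R := Rabs (Q2R x - Q2R y).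

(* Main.v *)
Require Import Defs.
From Stdlib Require Import Reals QArith Qreals.
From Stdlib Require Import Lra Lia Psatz Classical Setoid.
Open Scope R_scope.

Definition Neg (a : form) := Imp a Bot.
Definition Box (a : form) := Imp (Dia (Imp a Bot)) Bot.
Arguments Box : simpl never.

Definition phi : form :=
  Imp (Box (Imp (Box (Var 0)) (Dia (Var 1))))
   (Imp (Box (Imp (Dia (Var 1)) (Box (Var 0))))
     (Imp (Dia (Box (Var 0))) (Box (Box (Var 0))))).

Lemma sat_box {X : Type} (Rel : X -> X -> Prop) V x a :
  sat Rel V x (Box a) <-> forall y, Rel x y -> sat Rel V y a.
Proof.
  unfold Box; simpl; split.
  - intros H y Hy. destruct (classic (sat Rel V y a)) as [h|h]; auto.
    exfalso; apply H; eauto.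
  - intros H [y [Hy Hn]]. apply Hn; auto.
Qed.

Lemma conn (S T : R -> Prop) a b :
 (forall s, (forall e, 0<e -> exists u, Rabs (u - s) < e /\ S u) -> S s) ->
 (forall s, T s -> exists d, 0<d /\ forall u, Rabs (u - s) < d -> T u) ->
 a < b -> S a -> ~ S b -> (forall u, a <= u <= b -> (S u <-> T u)) -> False.
Proof.
  intros Scl Top Hab Sa Sb Hst.
  set (E := fun t => a <= t <= b /\ forall u, a <= u <= t -> S u).
  assert (Hb : bound E) by (exists b; intros t [Ht _]; lra).
  assert (Ea : E a).
  { split; [lra|]. intros u Hu. replace u with a by lra. exact Sa. }
  destruct (completeness E Hb (ex_intro _ a Ea)) as [s [Hub Hlub]].
  assert (Has : a <= s) by (apply Hub; exact Ea).
  assert (Hsb : s <= b) by (apply Hlub; intros t [Ht _]; lra).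
  assert (HA : forall u, a <= u < s -> S u).
  { intros u Hu. destruct (classic (S u)) as [h|HnS]; auto; exfalso.
    assert (is_upper_bound E u).
    { intros t Et. destruct (Rle_or_lt t u) as [|Hlt]; auto; exfalso.
      apply HnS; apply (proj2 Et); lra. }
    specialize (Hlub u H); lra. }
  assert (HSs : S s).
  { destruct (Req_dec s a) as [->|Hne]; auto.
    apply Scl; intros e He. exists (Rmax a (s - e/2)). split.
    - unfold Rmax; destruct Rle_dec; apply Rabs_def1; lra.
    - apply HA. split; [apply Rmax_l | unfold Rmax; destruct Rle_dec; lra]. }
  assert (Hsb' : s < b).
  { destruct (Req_dec s b) as [->|]; [contradiction|lra]. }
  assert (HTs : T s) by (apply Hst; [lra| exact HSs]).
  destruct (Top s HTs) as [d [Hd Hdu]].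
  assert (Hm1 := Rmin_l (d/2) (b - s)).
  assert (Hm2 := Rmin_r (d/2) (b - s)).
  assert (Hm3 : 0 < Rmin (d/2) (b - s)) by (unfold Rmin; destruct Rle_dec; lra).
  assert (Et : E (s + Rmin (d/2) (b - s))).
  { split; [lra|]. intros u Hu. destruct (Rlt_or_le u s).
    - apply HA; lra.
    - apply Hst; [lra|]. apply Hdu. apply Rabs_def1; lra. }
  specialize (Hub _ Et). lra.
Qed.

Lemma box_closed V a s :
  (forall e, 0<e -> exists u, Rabs (u - s) < e /\ sat (rel_lt1 dist_R) V u (Box a)) ->
  sat (rel_lt1 dist_R) V s (Box a).
Proof.
  intros H. rewrite sat_box. intros z Hz. unfold rel_lt1, dist_R in Hz.
  destruct (H (1 - Rabs (s - z))) as [u [Hu Hsu]]; [lra|].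
  rewrite sat_box in Hsu. apply Hsu. unfold rel_lt1, dist_R.
  replace (u - z) with ((u - s) + (s - z)) by ring.
  eapply Rle_lt_trans; [apply Rabs_triang|]. lra.
Qed.

Lemma dia_open V a s :
  sat (rel_lt1 dist_R) V s (Dia a) ->
  exists d, 0<d /\ forall u, Rabs (u - s) < d -> sat (rel_lt1 dist_R) V u (Dia a).
Proof.
  simpl. intros [z [Hz Hza]]. unfold rel_lt1, dist_R in *.
  exists (1 - Rabs (s - z)). split; [lra|]. intros u Hu. exists z. split; auto.
  replace (u - z) with ((u - s) + (s - z)) by ring.
  eapply Rle_lt_trans; [apply Rabs_triang|]. lra.
Qed.

Lemma valid_R : Log_lt1 dist_R phi.
Proof.
  unfold Log_lt1, valid_in. intros V x. unfold phi. cbn [sat].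
  rewrite !sat_box. intros H1 H2 H3 y1 Hy1.
  destruct H3 as [y0 [Hy0 HS0]].
  destruct (classic (sat (rel_lt1 dist_R) V y1 (Box (Var 0)))) as [h|HS1]; auto.
  exfalso. unfold rel_lt1, dist_R in *.
  assert (Hiff : forall u, Rabs (x - u) < 1 ->
     (sat (rel_lt1 dist_R) V u (Box (Var 0)) <-> sat (rel_lt1 dist_R) V u (Dia (Var 1)))).
  { intros u Hu; split; [apply H1 | apply H2]; exact Hu. }
  destruct (Rtotal_order y0 y1) as [Hlt|[Heq|Hgt]].
  - apply (conn (fun u => sat (rel_lt1 dist_R) V u (Box (Var 0)))
                (fun u => sat (rel_lt1 dist_R) V u (Dia (Var 1))) y0 y1).
    + intros s Hs; apply box_closed; exact Hs.
    + intros s Hs; apply dia_open; exact Hs.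
    + exact Hlt.
    + exact HS0.
    + exact HS1.
    + intros u Hu. apply Hiff.
      apply Rabs_def2 in Hy0; apply Rabs_def2 in Hy1. apply Rabs_def1; lra.
  - subst; contradiction.
  - apply (conn (fun u => sat (rel_lt1 dist_R) V (-u) (Box (Var 0)))
                (fun u => sat (rel_lt1 dist_R) V (-u) (Dia (Var 1))) (-y0) (-y1)).
    + intros s Hs; apply box_closed. intros e He.
      destruct (Hs e He) as [u [Hu Hsu]]. exists (-u). split; auto.
      replace (-u - - s) with (-(u - s)) by ring. rewrite Rabs_Ropp; exact Hu.
    + intros s Hs. destruct (dia_open _ _ _ Hs) as [d [Hd Hdu]].
      exists d; split; auto. intros u Hu. apply Hdu.
      replace (-u - - s) with (-(u - s)) by ring. rewrite Rabs_Ropp; exact Hu.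
    + lra.
    + rewrite Ropp_involutive. exact HS0.
    + rewrite Ropp_involutive. exact HS1.
    + intros u Hu. apply Hiff.
      apply Rabs_def2 in Hy0; apply Rabs_def2 in Hy1. apply Rabs_def1; lra.
Qed.

Lemma no_sqrt2_Z : forall N : nat, forall m d : Z, (0 < d)%Z -> (Z.to_nat d <= N)%nat ->
  (m * m = 2 * d * d)%Z -> False.
Proof.
  induction N as [|N IH]; intros m d Hd HN Hmd.
  - lia.
  - destruct (Z.Even_or_Odd m) as [[k Hk]|[k Hk]]; subst m; [|nia].
    destruct (Z.Even_or_Odd d) as [[j Hj]|[j Hj]]; subst d; [|nia].
    apply (IH k j); [lia|lia|nia].
Qed.

Lemma Q2R_1 : Q2R 1 = 1.
Proof. unfold Q2R; simpl; lra. Qed.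

Lemma irr (q : Q) : Q2R q <> sqrt 2 - 1.
Proof.
  intros H. destruct q as [n d]. unfold Q2R in H; simpl in H.
  assert (Hd : 0 < IZR (Z.pos d)) by (apply IZR_lt; lia).
  assert (Hs : sqrt 2 * sqrt 2 = 2) by (apply sqrt_sqrt; lra).
  assert (E : (IZR n + IZR (Z.pos d)) * (IZR n + IZR (Z.pos d)) = 2 * IZR (Z.pos d) * IZR (Z.pos d)).
  { assert (IZR n = (sqrt 2 - 1) * IZR (Z.pos d)).
    { rewrite <- H. field. lra. }
    rewrite H0. replace ((sqrt 2 - 1) * IZR (Z.pos d) + IZR (Z.pos d)) with (sqrt 2 * IZR (Z.pos d)) by ring.
    replace (sqrt 2 * IZR (Z.pos d) * (sqrt 2 * IZR (Z.pos d))) with ((sqrt 2 * sqrt 2) * IZR (Z.pos d) * IZR (Z.pos d)) by ring.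
    rewrite Hs. ring. }
  rewrite <- plus_IZR, <- !mult_IZR in E. apply eq_IZR in E.
  apply (no_sqrt2_Z (Z.to_nat (Z.pos d)) (n + Z.pos d) (Z.pos d)); auto; lia.
Qed.

Lemma dense_small (e : R) : 0 < e -> exists h : Q, 0 < Q2R h < e.
Proof.
  intros He. destruct (archimed (/ e)) as [H1 _].
  assert (Hi : 0 < / e) by (apply Rinv_0_lt_compat; lra).
  set (z := up (/ e)) in *.
  assert (Hz : (0 < z)%Z) by (apply lt_IZR; lra).
  exists (Qmake 1 (Z.to_pos z)). unfold Q2R; simpl.
  rewrite Z2Pos.id by lia. split.
  - apply Rmult_lt_0_compat; [lra|]. apply Rinv_0_lt_compat; lra.
  - rewrite Rmult_1_l. rewrite <- (Rinv_inv e). apply Rinv_lt_contravar; [|lra].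
    apply Rmult_lt_0_compat; lra.
Qed.

Definition c0 := sqrt 2 - 1.

Lemma c0_bounds : 0 < c0 < 1/2.
Proof.
  unfold c0. assert (Hs : sqrt 2 * sqrt 2 = 2) by (apply sqrt_sqrt; lra).
  assert (H0 := sqrt_pos 2). split; nra.
Qed.

Definition VQ (n : nat) (q : Q) : Prop :=
  match n with 0%nat => Q2R q < c0 + 1 | _ => Q2R q < c0 - 1 end.

Lemma boxQ q : sat (rel_lt1 dist_Q) VQ q (Box (Var 0)) <-> Q2R q < c0.
Proof.
  rewrite sat_box. unfold rel_lt1, dist_Q; simpl. split.
  - intros H. destruct (Rlt_or_le (Q2R q) c0) as [|Hle]; auto. exfalso.
    assert (Hgt : c0 < Q2R q) by (destruct Hle as [|E]; auto; exfalso; apply (irr q); symmetry; exact E).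
    destruct (dense_small (Rmin (Q2R q - c0) (1/2))) as [h [Hh1 Hh2]].
    { unfold Rmin; destruct Rle_dec; lra. }
    assert (Hm1 := Rmin_l (Q2R q - c0) (1/2)). assert (Hm2 := Rmin_r (Q2R q - c0) (1/2)).
    specialize (H (q + 1 - h)%Q). rewrite Q2R_minus, Q2R_plus, Q2R_1 in H.
    assert (Q2R q + 1 - Q2R h < c0 + 1); [|lra].
    apply H. apply Rabs_def1; lra.
  - intros Hq y Hy. apply Rabs_def2 in Hy. lra.
Qed.

Lemma diaQ q : sat (rel_lt1 dist_Q) VQ q (Dia (Var 1)) <-> Q2R q < c0.
Proof.
  unfold rel_lt1, dist_Q; simpl. split.
  - intros [y [Hy Hy2]]. apply Rabs_def2 in Hy. lra.
  - intros Hq.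
    destruct (dense_small (Rmin (c0 - Q2R q) (1/2))) as [h [Hh1 Hh2]].
    { unfold Rmin; destruct Rle_dec; lra. }
    assert (Hm1 := Rmin_l (c0 - Q2R q) (1/2)). assert (Hm2 := Rmin_r (c0 - Q2R q) (1/2)).
    exists (q - 1 + h)%Q. rewrite Q2R_plus, Q2R_minus, Q2R_1. split.
    + apply Rabs_def1; lra.
    + lra.
Qed.

Theorem proposition4p9 :
  ~ (forall phi : form, Log_lt1 dist_R phi -> Log_lt1 dist_Q phi).
Proof.
  intros Hall. specialize (Hall phi valid_R VQ 0%Q).
  unfold phi in Hall. cbn [sat] in Hall.
  assert (Hc := c0_bounds).
  assert (Hx : sat (rel_lt1 dist_Q) VQ (1#2)%Q (Box (Var 0))).
  { rewrite !sat_box in Hall.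
    apply Hall.
    - intros y _. change (sat (rel_lt1 dist_Q) VQ y (Box (Var 0)) -> sat (rel_lt1 dist_Q) VQ y (Dia (Var 1))). rewrite boxQ, diaQ. auto.
    - intros y _. change (sat (rel_lt1 dist_Q) VQ y (Dia (Var 1)) -> sat (rel_lt1 dist_Q) VQ y (Box (Var 0))). rewrite boxQ, diaQ. auto.
    - exists 0%Q. split.
      + unfold rel_lt1, dist_Q. rewrite Rminus_diag, Rabs_R0. lra.
      + rewrite boxQ. unfold Q2R; simpl. lra.
    - unfold rel_lt1, dist_Q. unfold Q2R; simpl. apply Rabs_def1; lra. }
  rewrite boxQ in Hx. unfold Q2R in Hx; simpl in Hx. lra.
Qed.
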